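(* Fix $z$ in a sufficiently small neighborhood of $\tfrac12$. Then $$\widehat\psi(\zeta,1-z)=-\widehat\varphi(\zeta,z).$$
   Context: For a parameter $t$ near $\frac12$: $Q(w)=w(w-1)(w-t)$, $w_\pm(t)=\frac13(t+1)\pm\frac13(t^2-t+1)^{1/2}$ (principal root), $Q_\pm(t)=Q(w_\pm(t))$. With $u(t)=\frac{3t-(t+1)^2}{3}$, $v(Q,t)=\frac1{27}\big(-2(t+1)^3+9t(t+1)-27Q\big)$, principal branches, $w_k(Q,t)=\frac{t+1}{3}+2\left(-\frac u3\right)^{1/2}\cos\!\Big(\frac13\arccos\Big(\frac{3v}{2u}\big(-\frac3u\big)^{1/2}\Big)+\theta_k\Big)$, $\theta_0=\frac{2\pi}3,\theta_1=0,\theta_2=-\frac{2\pi}3$. $\Psi(Q,t)=Q\frac{2w_1-w_0-w_2}{(w_0-w_1)(w_0-w_2)(w_1-w_2)}$, $\Phi(Q,t)=Q\frac{w_1+w_2-2w_0}{(w_0-w_1)(w_0-w_2)(w_1-w_2)}$ with $w_k=w_k(Q,t)$; $\widehat\psi(\zeta,t)=\Psi(Q_-(t)e^{-\zeta},t)$, $\widehat\varphi(\zeta,t)=\Phi(Q_+(t)e^{-\zeta},t)$. *)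

(* Defs.v *)
From Stdlib Require Import Reals.
From Coquelicot Require Import Coquelicot.
Open Scope R_scope.

(* Principal argument, with values in (-PI, PI]; Carg 0 = 0 (irrelevant). *)
Definition Carg (z : C) : R :=
  let x := Re z in let y := Im z in
  if Rlt_dec 0 x then atan (y / x)
  else if Rlt_dec x 0 then
    (if Rle_dec 0 y then atan (y / x) + PI else atan (y / x) - PI)
  else (if Rlt_dec 0 y then PI / 2
        else if Rlt_dec y 0 then - (PI / 2) else 0).

Definition Cexp (z : C) : C :=
  (exp (Re z) * cos (Im z), exp (Re z) * sin (Im z)).

(* Principal logarithm (Log 0 := ln 0 arbitrary, never used meaningfully). *)
Definition Clog (z : C) : C := (ln (Cmod z), Carg z).

Definition Csqrt (z : C) : C :=
  if Req_EM_T (Cmod z) 0 then 0%C else Cexp (Clog z / 2)%C.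

Definition Ccos (z : C) : C :=
  ((Cexp (Ci * z) + Cexp (- (Ci * z))) / 2)%C.

(* Principal inverse sine and cosine (DLMF 4.23.19, 4.23.22):
   arcsin z = -i Log( (1-z^2)^{1/2} + i z ),  arccos z = pi/2 - arcsin z. *)
Definition Carcsin (z : C) : C :=
  (- Ci * Clog (Csqrt (1 - z * z) + Ci * z))%C.
Definition Carccos (z : C) : C := (RtoC (PI / 2) - Carcsin z)%C.

Definition Qpoly (t w : C) : C := (w * (w - 1) * (w - t))%C.

Definition wplus (t : C) : C :=
  ((t + 1) / 3 + / 3 * Csqrt (t * t - t + 1))%C.
Definition wminus (t : C) : C :=
  ((t + 1) / 3 - / 3 * Csqrt (t * t - t + 1))%C.

Definition Qplus (t : C) : C := Qpoly t (wplus t).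
Definition Qminus (t : C) : C := Qpoly t (wminus t).

Definition u_of (t : C) : C := ((3 * t - (t + 1) * (t + 1)) / 3)%C.
Definition v_of (Q t : C) : C :=
  (/ 27 * (- 2 * ((t + 1) * (t + 1) * (t + 1)) + 9 * t * (t + 1) - 27 * Q))%C.

Definition theta (k : nat) : R :=
  match k with
  | 0%nat => 2 * PI / 3
  | 1%nat => 0
  | _ => - (2 * PI / 3)
  end.

Definition wk (k : nat) (Q t : C) : C :=
  let u := u_of t in let v := v_of Q t in
  ((t + 1) / 3 + 2 * Csqrt (- u / 3) *
     Ccos (/ 3 * Carccos (3 * v / (2 * u) * Csqrt (- 3 / u)) + RtoC (theta k)))%C.

Definition Psi (Q t : C) : C :=
  let w0 := wk 0 Q t in let w1 := wk 1 Q t in let w2 := wk 2 Q t in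
  (Q * (2 * w1 - w0 - w2) / ((w0 - w1) * (w0 - w2) * (w1 - w2)))%C.

Definition Phi (Q t : C) : C :=
  let w0 := wk 0 Q t in let w1 := wk 1 Q t in let w2 := wk 2 Q t in
  (Q * (w1 + w2 - 2 * w0) / ((w0 - w1) * (w0 - w2) * (w1 - w2)))%C.

Definition psihat (zeta t : C) : C := Psi (Qminus t * Cexp (- zeta))%C t.
Definition phihat (zeta t : C) : C := Phi (Qplus t * Cexp (- zeta))%C t.

(* Main.v *)
Require Import Defs.
From Stdlib Require Import Reals Lra Lia.
From Coquelicot Require Import Coquelicot.
Open Scope R_scope.

Lemma Cexp_add (a b : C) : Cexp (a + b) = (Cexp a * Cexp b)%C.
Proof.
  destruct a as [a1 a2], b as [b1 b2]; unfold Cexp; simpl.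
  rewrite exp_plus, cos_plus, sin_plus.
  apply injective_projections; simpl; ring.
Qed.

Lemma Carg_bound (w : C) : - PI <= Carg w <= PI.
Proof.
  destruct w as [x y]; unfold Carg; simpl.
  pose proof PI_RGT_0.
  destruct (Rlt_dec 0 x).
  - pose proof (atan_bound (y/x)); lra.
  - destruct (Rlt_dec x 0).
    + destruct (Rle_dec 0 y).
      * assert (y / x <= 0).
        { unfold Rdiv. assert (/x < 0) by (apply Rinv_lt_0_compat; lra). nra. }
        pose proof (atan_bound (y/x)).
        assert (atan (y/x) <= 0).
        { rewrite <- atan_0. destruct (Req_dec (y/x) 0) as [E|E].
          rewrite E; lra. left; apply atan_increasing; lra. }
        lra.
      * assert (0 < y / x).
        { unfold Rdiv. assert (/x < 0) by (apply Rinv_lt_0_compat; lra). nra. }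
        pose proof (atan_bound (y/x)).
        assert (0 < atan (y/x)).
        { rewrite <- atan_0. apply atan_increasing; lra. }
        lra.
    + destruct (Rlt_dec 0 y); [lra|]. destruct (Rlt_dec y 0); lra.
Qed.

Lemma sqrt_factor (x y : R) : x <> 0 ->
  sqrt (x ^ 2 + y ^ 2) = Rabs x * sqrt (1 + (y / x)²).
Proof.
  intros Hx.
  rewrite <- sqrt_Rsqr_abs.
  rewrite <- sqrt_mult_alt by (apply Rle_0_sqr).
  f_equal. unfold Rsqr. field. auto.
  all: try (pose proof (Rle_0_sqr (y/x)); lra).
Qed.

Lemma polar (w : C) : w <> 0%C ->
  Cmod w * cos (Carg w) = fst w /\ Cmod w * sin (Carg w) = snd w.
Proof.
  intros Hw. destruct w as [x y]; unfold Carg, Cmod, Re, Im; cbn [fst snd].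
  destruct (Rlt_dec 0 x).
  - rewrite sqrt_factor by lra. rewrite cos_atan, sin_atan, Rabs_right by lra.
    assert (0 < sqrt (1 + (y/x)²)) by (apply sqrt_lt_R0; pose proof (Rle_0_sqr (y/x)); lra).
    split; field; lra.
  - destruct (Rlt_dec x 0).
    + rewrite sqrt_factor by lra. rewrite Rabs_left by lra.
      assert (0 < sqrt (1 + (y/x)²)) by (apply sqrt_lt_R0; pose proof (Rle_0_sqr (y/x)); lra).
      destruct (Rle_dec 0 y).
      * rewrite neg_cos, neg_sin, cos_atan, sin_atan. split; field; lra.
      * rewrite cos_minus, sin_minus, cos_PI, sin_PI, cos_atan, sin_atan. split; field; lra.
    + assert (x = 0) by lra. subst x.
      destruct (Rlt_dec 0 y).
      * rewrite cos_PI2, sin_PI2. replace (0 ^ 2 + y ^ 2) with (y²) by (unfold Rsqr; ring).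
        rewrite sqrt_Rsqr by lra. split; ring.
      * destruct (Rlt_dec y 0).
        -- rewrite cos_neg, sin_neg, cos_PI2, sin_PI2.
           replace (0 ^ 2 + y ^ 2) with (y²) by (unfold Rsqr; ring).
           rewrite sqrt_Rsqr_abs, Rabs_left by lra. split; ring.
        -- exfalso. apply Hw. apply injective_projections; simpl; lra.
Qed.


Lemma Clog_half (w : C) : (Clog w / 2)%C = (ln (Cmod w) / 2, Carg w / 2).
Proof. unfold Clog. apply injective_projections; simpl; field. Qed.

Lemma Cexp_Clog (w : C) : w <> 0%C -> Cexp (Clog w) = w.
Proof.
  intros Hw. destruct (polar w Hw) as [H1 H2].
  assert (0 < Cmod w) by (apply Cmod_gt_0; auto).
  unfold Cexp, Clog, Re, Im; cbn [fst snd]. rewrite exp_ln by auto.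
  rewrite H1, H2. destruct w; reflexivity.
Qed.

Lemma Csqrt_sq (w : C) : (Csqrt w * Csqrt w)%C = w.
Proof.
  unfold Csqrt. destruct (Req_EM_T (Cmod w) 0) as [E|E].
  - apply Cmod_eq_0 in E. subst. ring.
  - assert (w <> 0%C) by (intro; subst; apply E; apply Cmod_0).
    rewrite <- Cexp_add. replace (Clog w / 2 + Clog w / 2)%C with (Clog w) by field.
    apply Cexp_Clog; auto.
Qed.

Lemma Csqrt_re (w : C) : 0 <= fst (Csqrt w).
Proof.
  unfold Csqrt. destruct (Req_EM_T (Cmod w) 0) as [E|E].
  - simpl; lra.
  - rewrite Clog_half. unfold Cexp, Re, Im; cbn [fst snd].
    pose proof (Carg_bound w). pose proof (exp_pos (ln (Cmod w) / 2)).
    assert (0 <= cos (Carg w / 2)) by (apply cos_ge_0; lra). nra.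
Qed.


Lemma Carg_scale (x y k : R) : 0 < k -> ~ (y = 0 /\ x < 0) ->
  Carg (x * k, - y * k) = - Carg (x, y).
Proof.
  intros Hk Hn. unfold Carg, Re, Im; cbn [fst snd].
  destruct (Rlt_dec 0 (x*k)) as [a|a]; destruct (Rlt_dec 0 x) as [b|b];
  try (exfalso; nra).
  - replace (- y * k / (x * k)) with (- (y / x)) by (field; lra).
    rewrite atan_opp; ring.
  - destruct (Rlt_dec (x*k) 0) as [c|c]; destruct (Rlt_dec x 0) as [d|d];
    try (exfalso; nra).
    + replace (- y * k / (x * k)) with (- (y / x)) by (field; lra).
      rewrite atan_opp.
      destruct (Rle_dec 0 (-y*k)) as [e|e]; destruct (Rle_dec 0 y) as [f|f];
      try (exfalso; nra); try ring.
    + destruct (Rlt_dec 0 (-y*k)) as [e|e]; destruct (Rlt_dec 0 y) as [f|f];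
      try (exfalso; nra); try ring.
      all: destruct (Rlt_dec (-y*k) 0) as [g|g]; destruct (Rlt_dec y 0) as [h|h];
      try (exfalso; nra); try ring.
Qed.

Lemma Clog_inv (a b : C) : (a * b = 1)%C -> ~ (snd a = 0 /\ fst a < 0) ->
  Clog b = (- Clog a)%C.
Proof.
  intros Hab Hn.
  assert (Ha : a <> 0%C) by (intro E; subst; rewrite Cmult_0_l in Hab;
     apply (f_equal fst) in Hab; simpl in Hab; lra).
  assert (Hb : b = Cinv a).
  { rewrite <- (Cmult_1_l b), <- (Cinv_l a Ha), <- Cmult_assoc, Hab. ring. }
  subst b. unfold Clog. rewrite Cmod_inv by auto.
  assert (0 < Cmod a) by (apply Cmod_gt_0; auto).
  rewrite ln_Rinv by auto.
  destruct a as [x y]. unfold Cinv; cbn [fst snd] in *.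
  assert (Hn2 : 0 < x^2 + y^2).
  { destruct (Rtotal_order x 0) as [h|[h|h]]; try nra.
    destruct (Rtotal_order y 0) as [g|[g|g]]; try nra.
    exfalso; apply Ha; subst; reflexivity. }
  unfold Rdiv. rewrite Carg_scale by (try apply Rinv_0_lt_compat; tauto).
  apply injective_projections; simpl; ring.
Qed.


Lemma Carcsin_odd (X : C) : Carcsin (- X) = (- Carcsin X)%C.
Proof.
  unfold Carcsin. replace (1 - - X * - X)%C with (1 - X * X)%C by ring.
  set (s := Csqrt (1 - X * X)).
  assert (Hss : (s * s)%C = (1 - X * X)%C) by apply Csqrt_sq.
  assert (Hre : 0 <= fst s) by apply Csqrt_re.
  set (a := (s + Ci * X)%C). set (b := (s + Ci * - X)%C).
  assert (Hab : (a * b = 1)%C).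
  { assert (Hi : (Ci * Ci = - 1)%C) by (apply injective_projections; simpl; ring).
    unfold a, b. transitivity (s * s - (Ci * Ci) * (X * X))%C; [ring|].
    rewrite Hi, Hss; ring. }
  assert (Hsum : (a + b)%C = (2 * s)%C) by (unfold a, b; ring).
  rewrite (Clog_inv a b Hab). ring.
  intros [H1 H2].
  apply (f_equal fst) in Hsum. apply (f_equal fst) in Hab.
  destruct a as [p q], b as [r t], s as [s1 s2]. simpl in *. subst q.
  nra.
Qed.


Lemma Carccos_neg (X : C) : Carccos (- X) = (RtoC PI - Carccos X)%C.
Proof.
  unfold Carccos. rewrite Carcsin_odd. destruct (Carcsin X).
  apply injective_projections; simpl; field.
Qed.

Lemma Cexp_shift (z : C) (r : R) : Cexp (z + (0, r))%C = (Cexp z * (cos r, sin r))%C.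
Proof.
  rewrite Cexp_add. f_equal. unfold Cexp; simpl. rewrite exp_0.
  apply injective_projections; simpl; ring.
Qed.

Lemma Ccos_even (w : C) : Ccos (- w) = Ccos w.
Proof.
  unfold Ccos. replace (- (Ci * - w))%C with (Ci * w)%C by ring.
  replace (Ci * - w)%C with (- (Ci * w))%C by ring. f_equal; apply Cplus_comm.
Qed.

Lemma Ccos_pi (w1 w2 : C) : (w2 = w1 + RtoC PI \/ w2 = w1 - RtoC PI)%C ->
  Ccos w2 = (- Ccos w1)%C.
Proof.
  intros H. unfold Ccos.
  destruct H as [H|H]; subst w2.
  - replace (Ci * (w1 + RtoC PI))%C with (Ci * w1 + (0%R, PI))%C
      by (apply injective_projections; simpl; ring).
    replace (- (Ci * w1 + (0%R, PI)))%C with (- (Ci * w1) + (0%R, (- PI)%R))%C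
      by (apply injective_projections; simpl; ring).
    rewrite !Cexp_shift, cos_neg, sin_neg, cos_PI, sin_PI.
    destruct (Cexp (Ci * w1)), (Cexp (- (Ci * w1))).
    apply injective_projections; simpl; field.
  - replace (Ci * (w1 - RtoC PI))%C with (Ci * w1 + (0%R, (- PI)%R))%C
      by (apply injective_projections; simpl; ring).
    replace (- (Ci * w1 + (0%R, (- PI)%R)))%C with (- (Ci * w1) + (0%R, PI))%C
      by (apply injective_projections; simpl; ring).
    rewrite !Cexp_shift, cos_neg, sin_neg, cos_PI, sin_PI.
    destruct (Cexp (Ci * w1)), (Cexp (- (Ci * w1))).
    apply injective_projections; simpl; field.
Qed.


Definition sigk (k : nat) : nat :=
  match k with 0%nat => 1%nat | 1%nat => 0%nat | _ => k end.

Lemma cos_part (k : nat) (A : C) : (k <= 2)%nat ->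
  Ccos (/ 3 * (RtoC PI - A) + RtoC (theta k))%C =
  (- Ccos (/ 3 * A + RtoC (theta (sigk k))))%C.
Proof.
  intros Hk. rewrite <- Ccos_even. apply Ccos_pi.
  destruct A as [a1 a2].
  destruct k as [|[|[|k]]]; simpl sigk; unfold theta.
  - right. apply injective_projections; simpl; field.
  - right. apply injective_projections; simpl; field.
  - left. apply injective_projections; simpl; field.
  - lia.
Qed.

Lemma wk_sym (k : nat) (Q z : C) : (k <= 2)%nat ->
  wk k (- Q) (1 - z) = (1 - wk (sigk k) Q z)%C.
Proof.
  intros Hk. unfold wk. cbv zeta.
  replace (u_of (1 - z)) with (u_of z) by (unfold u_of; field).
  replace (v_of (- Q) (1 - z)) with (- v_of Q z)%C by (unfold v_of; field).
  set (u := u_of z). set (v := v_of Q z).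
  replace (3 * - v / (2 * u) * Csqrt (- 3 / u))%C
    with (- (3 * v / (2 * u) * Csqrt (- 3 / u)))%C by (unfold Cdiv; ring).
  rewrite Carccos_neg, cos_part by auto.
  field.
Qed.


Lemma Qminus_sym (z : C) : Qminus (1 - z) = (- Qplus z)%C.
Proof.
  unfold Qminus, Qplus, wminus, wplus, Qpoly.
  replace ((1 - z) * (1 - z) - (1 - z) + 1)%C with (z * z - z + 1)%C by ring.
  field.
Qed.

Theorem proposition3p8 :
  exists eps : R, (0 < eps)%R /\
    forall z : C, (Cmod (z - RtoC (1 / 2)) < eps)%R ->
      forall zeta : C, psihat zeta (1 - z)%C = (- phihat zeta z)%C.
Proof.
  exists 1. split; [lra|]. intros z _ zeta.
  unfold psihat, phihat. rewrite Qminus_sym.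
  set (Q := (Qplus z * Cexp (- zeta))%C).
  replace (- Qplus z * Cexp (- zeta))%C with (- Q)%C by (unfold Q; ring).
  unfold Psi, Phi. cbv zeta.
  rewrite !wk_sym by lia. simpl sigk.
  set (a := wk 0 Q z). set (b := wk 1 Q z). set (c := wk 2 Q z).
  replace ((1 - b - (1 - a)) * (1 - b - (1 - c)) * (1 - a - (1 - c)))%C
    with ((a - b) * (a - c) * (b - c))%C by ring.
  unfold Cdiv. ring.
Qed.
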